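(* Assume Assumptions A.1–A.6. Suppose $q:\Theta\to\mathbb{R}$ is bounded on $\Theta$ and continuous on $\Theta_{\#\#}$. Then for each $t\ge1$, the function $\theta\mapsto E(q(\theta_t^* )\mid\theta_0^*=\theta)$ is continuous on $\Theta_{\#\#}$.
   Context: Model: $\xi_t=a(X_{t-1})+b(X_{t-1})e_t$ with $X_t=(\xi_t,\dots,\xi_{t-p+1})\in\mathbb{R}^p$, $\{e_t\}$ i.i.d. $\|\cdot\|$ Euclidean, $\Theta=\{\theta:\|\theta\|=1\}$, $\mathbb{R}^p_0=\mathbb{R}^p\setminus\{0\}$, $H_0=\{x:\min_i|x_i|=0\}$, $\Theta_\#=\Theta\setminus H_0$. A.1: $e_t$ has Lebesgue density $f$ locally bounded away from $0$; $b$ positive, locally bounded, locally bounded away from $0$. A.2: $\sup_u(1+|u|)f(u)<\infty$, $E|e_1|^{r_0}<\infty$ for some $r_0>0$. A.3: $a(x)/(1+\|x\|)$, $b(x)/(1+\|x\|)$ bounded. A.4: bounded $a_*,b_*$ on $\Theta$ with $\sup_{\theta}|a(w\theta)/w-a_*(\theta)|\to0$, $\sup_\theta|b(w\theta)/w-b_*(\theta)|\to0$ as $w\to\infty$; $a^*(x)=a_*(x/\|x\|)\|x\|$, $b^*(x)=b_*(x/\|x\|)\|x\|$, $a^*(0)=b^*(0)=0$. A.5: if $p>1$, $\max(|a^*|,b^* )$ locally bounded away from $0$ on $\mathbb{R}^p_0$ and $b^*$ locally bounded away from $0$ on $\mathbb{R}^p\setminus H_0$. A.6: if $p>1$, there are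 $(p-1)$-dimensional hyperplanes $H_1,\dots,H_m$ through the origin with $a^*,b^*$ continuous off $\bigcup_jH_j$. $F\theta=(\theta_2,\dots,\theta_p,\theta_1)$; $\Theta_{\#\#}=\{\theta\in\Theta_\#:F^k\theta\notin H_j\ \forall j,k\}$. $z(x,u)=a^*(x)+b^*(x)u$, $w(x,u)=\|(z(x,u),x_1,\dots,x_{p-1})\|$; collapsed chain $\theta_t^*=(z(\theta^*_{t-1},e_t),\theta^*_{t-1,1},\dots,\theta^*_{t-1,p-1})/w(\theta^*_{t-1},e_t)$. *)

(* Defs.v *)
From mathcomp Require Import all_boot all_order all_algebra.
From mathcomp Require Import all_classical all_reals all_analysis.
Set Implicit Arguments. Unset Strict Implicit. Unset Printing Implicit Defensive.
Import Order.TTheory GRing.Theory Num.Theory.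
Import numFieldNormedType.Exports.
Local Open Scope classical_set_scope.
Local Open Scope ring_scope.

Section Defs.
Variables (R : realType) (p : nat).
Notation vec := 'rV[R]_p.

(* Euclidean norm on R^p (the library's norm on 'rV is the max norm) *)
Definition enorm (x : vec) : R := Num.sqrt (\sum_i x ord0 i ^+ 2).

Definition Theta : set vec := [set x | enorm x = 1].
Definition H0 : set vec := [set x | exists i, x ord0 i = 0].
Definition Theta_sharp : set vec := Theta `\` H0.

Definition Fshift (x : vec) : vec := \row_i x ord0 (ordS i).

Definition hyperplane (nv : vec) : set vec :=
  [set x | \sum_i nv ord0 i * x ord0 i = 0].

Definition Theta_ss (m : nat) (nrm : 'I_m -> vec) : set vec :=
  [set th | Theta_sharp th /\
     forall (j : 'I_m) (k : nat), ~ hyperplane (nrm j) (iter k Fshift th)].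

Definition homog_ext (g : vec -> R) (x : vec) : R :=
  if x == 0 then 0 else g ((enorm x)^-1 *: x) * enorm x.

Definition zfun (ast bst : vec -> R) (x : vec) (u : R) : R :=
  ast x + bst x * u.

Definition newvec (ast bst : vec -> R) (x : vec) (u : R) : vec :=
  \row_i (if val i == 0%N then zfun ast bst x u else x ord0 (ord_pred i)).

Definition wfun ast bst x u : R := enorm (newvec ast bst x u).

(* one step of the collapsed chain: theta_t = Phi(theta_{t-1}, e_t) *)
Definition Phi ast bst x u : vec := (wfun ast bst x u)^-1 *: newvec ast bst x u.

(* transition operator of the collapsed chain, e_t having Lebesgue density f:
   (K g)(theta) = E g(Phi(theta, e_1)) = \int g(Phi(theta,u)) f(u) du *)
Definition Kop ast bst (f : R -> R) (g : vec -> R) (th : vec) : R :=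
  Rintegral lebesgue_measure setT (fun u => g (Phi ast bst th u) * f u).

(* E[ q(theta*_t) | theta*_0 = theta ] = (K^t q)(theta) *)
Definition condexp ast bst f (t : nat) (q : vec -> R) (th : vec) : R :=
  iter t (Kop ast bst f) q th.

Definition borel_meas (g : vec -> R) : Prop :=
  forall B : set R, measurable B -> <<s open >> (g @^-1` B).

Definition locally_bounded (g : vec -> R) : Prop :=
  forall x : vec, exists M : R, \forall y \near x, `|g y| <= M.

Definition loc_bdd_away0 (S : set vec) (g : vec -> R) : Prop :=
  forall x : vec, S x -> exists2 c : R, 0 < c & \forall y \near x, S y -> c <= `|g y|.

End Defs.

(* Main.v *)
Require Import Defs.
From mathcomp Require Import all_boot all_order all_algebra.
From mathcomp Require Import all_classical all_reals all_analysis.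
From mathcomp Require Import ring lra.
Import Order.TTheory GRing.Theory Num.Theory.
Import numFieldNormedType.Exports.
Local Open Scope classical_set_scope.
Local Open Scope ring_scope.
Set Implicit Arguments. Unset Strict Implicit. Unset Printing Implicit Defensive.

Section Alg.
Variables (R : realType) (n : nat).
Local Notation vec := 'rV[R]_n.+1.

Lemma iterF k (x : vec) (i : 'I_n.+1) :
  iter k (@Fshift R n.+1) x ord0 i = x ord0 (inord ((i + k) %% n.+1)).
Proof.
elim: k i => [|k IH] i /=.
  by rewrite addn0 modn_small // inord_val.
rewrite /Fshift mxE IH /=; congr (x ord0 (inord _)).
by rewrite modnDml addSnnS.
Qed.

Lemma newvecE ast bst (x : vec) u (j : 'I_n.+1) :
  newvec ast bst x u ord0 j =
  if val j == 0%N then zfun ast bst x u else x ord0 (inord ((j + n) %% n.+1)).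
Proof.
rewrite /newvec mxE; case: ifP => // _; congr (x ord0 _).
by apply: val_inj; rewrite /= inordK ?ltn_pmod // addnS.
Qed.

Lemma enorm_ge0 (x : vec) : 0 <= enorm x.
Proof. exact: sqrtr_ge0. Qed.

Lemma sum_sq_ge0 (x : vec) : 0 <= \sum_i x ord0 i ^+ 2.
Proof. by apply: sumr_ge0 => i _; exact: sqr_ge0. Qed.

Lemma enorm_coord (x : vec) i : `|x ord0 i| <= enorm x.
Proof.
rewrite /enorm -sqrtr_sqr ler_wsqrtr //.
rewrite (bigD1 i) //= lerDl; apply: sumr_ge0 => j _; exact: sqr_ge0.
Qed.

Lemma enorm_gt0 (x : vec) i : x ord0 i != 0 -> 0 < enorm x.
Proof.
move=> xi; apply: lt_le_trans (enorm_coord x i); by rewrite normr_gt0.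
Qed.

Lemma enormZ (s : R) (x : vec) : enorm (s *: x) = `|s| * enorm x.
Proof.
rewrite /enorm -sqrtr_sqr -sqrtrM ?sqr_ge0 //; congr Num.sqrt.
rewrite mulr_sumr; apply: eq_bigr => i _; by rewrite mxE exprMn.
Qed.

Lemma enorm_normalize (x : vec) : enorm x != 0 -> enorm ((enorm x)^-1 *: x) = 1.
Proof.
move=> h; rewrite enormZ ger0_norm ?invr_ge0 ?enorm_ge0 //; exact: mulVf.
Qed.

End Alg.

Section Bad.
Variables (R : realType) (n : nat).
Local Notation vec := 'rV[R]_n.+1.
Variables (ast bst : vec -> R) (m : nat) (nrm : 'I_m -> vec).

Lemma newvec1 (x : vec) u : (0 < n)%N ->
  newvec ast bst x u ord0 (inord 1) = x ord0 (inord 0).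
Proof.
move=> n0; have h1 : nat_of_ord (inord 1 : 'I_n.+1) = 1%N by rewrite inordK ?ltnS.
by rewrite newvecE /= h1 add1n modnn.
Qed.

Lemma wfun_neq0 (x : vec) u : (0 < n)%N -> ~ H0 x -> wfun ast bst x u != 0.
Proof.
move=> n0 hx; rewrite /wfun; apply/lt0r_neq0/(@enorm_gt0 _ _ _ (inord 1)).
rewrite newvec1 //; apply/negP => /eqP h; apply: hx; by exists (inord 0).
Qed.

Lemma Phi_Theta (x : vec) u : (0 < n)%N -> ~ H0 x -> Theta (Phi ast bst x u).
Proof.
move=> n0 hx; rewrite /Theta /Phi /=; apply: enorm_normalize.
exact: wfun_neq0.
Qed.

Lemma Phi_notH0 (x : vec) u : (0 < n)%N -> ~ H0 x -> zfun ast bst x u != 0 ->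
  ~ H0 (Phi ast bst x u).
Proof.
move=> n0 hx hz [i]; rewrite /Phi mxE => /eqP; rewrite mulf_eq0 invr_eq0.
rewrite (negbTE (wfun_neq0 u n0 hx)) /= newvecE.
case: ifP => _; first by rewrite (negbTE hz).
by move=> /eqP h; apply: hx; exists (inord ((i + n) %% n.+1)).
Qed.

Definition Tjk (x : vec) j k := \sum_i nrm j ord0 i * iter (k + n) (@Fshift R n.+1) x ord0 i.
Definition Bjk j k := \sum_(i < n.+1) nrm j ord0 i * (((i + k) %% n.+1) == 0)%N%:R.
Definition rootjk (x : vec) j k := x ord0 (inord n) - Tjk x j k / Bjk j k.

Lemma Phi_hyp (x : vec) u j k : (0 < n)%N -> ~ H0 x -> Tjk x j k != 0 ->
  hyperplane (nrm j) (iter k (@Fshift R n.+1) (Phi ast bst x u)) ->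
  zfun ast bst x u = rootjk x j k.
Proof.
move=> n0 hx hT; rewrite /hyperplane /=.
set z := zfun ast bst x u.
have coordE i : iter k (@Fshift R n.+1) (Phi ast bst x u) ord0 i =
   (wfun ast bst x u)^-1 * (iter (k + n) (@Fshift R n.+1) x ord0 i +
      (z - x ord0 (inord n)) * (((i + k) %% n.+1) == 0)%N%:R).
  rewrite !iterF /Phi mxE; congr (_ * _).
  have hv : nat_of_ord (inord ((i + k) %% n.+1) : 'I_n.+1) = ((i + k) %% n.+1)%N.
    by rewrite inordK ?ltn_pmod.
  rewrite newvecE /= hv addnA -(modnDml (i + k) n).
  case: eqP => [->|_]; last by rewrite mulr0 addr0.
  by rewrite mulr1 add0n modn_small // addrC subrK.
under eq_bigr do rewrite coordE.
rewrite -(eq_bigr _ (fun i _ => mulrCA _ _ _)) -mulr_sumr => /eqP.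
rewrite mulf_eq0 invr_eq0 (negbTE (wfun_neq0 u n0 hx)) /=.
under eq_bigr do rewrite mulrDr mulrCA.
rewrite big_split /= -mulr_sumr -/(Tjk x j k) -/(Bjk j k) => /eqP hs.
have hB : Bjk j k != 0.
  by apply/eqP => hB; move: hs; rewrite hB mulr0 addr0; apply/eqP.
have hT' : Tjk x j k = (x ord0 (inord n) - z) * Bjk j k.
  by rewrite -[LHS]subr0 -hs; ring.
by rewrite /rootjk hT' mulfK // opprB addrC subrK.
Qed.

Lemma Phi_S (x : vec) u : (0 < n)%N -> Theta_ss nrm x ->
  zfun ast bst x u != 0 -> (forall j k, zfun ast bst x u != rootjk x j k) ->
  Theta_ss nrm (Phi ast bst x u).
Proof.
move=> n0 [[_ hx] hh] hz hr; split; first split.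
- exact: Phi_Theta.
- exact: Phi_notH0.
move=> j k hyp.
have hT : Tjk x j k != 0.
  by apply/eqP => h; apply: (hh j (k + n)%N); rewrite /hyperplane /=; exact: h.
by have := hr j k; rewrite (Phi_hyp n0 hx hT hyp) eqxx.
Qed.

Lemma bad_countable (x : vec) : (0 < n)%N -> Theta_ss nrm x -> bst x != 0 ->
  countable [set u | ~ Theta_ss nrm (Phi ast bst x u)].
Proof.
move=> n0 hx hb.
pose g (o : option ('I_m * nat)) :=
  ((match o with None => 0 | Some jk => rootjk x jk.1 jk.2 end) - ast x) / bst x.
have hu u : u = (zfun ast bst x u - ast x) / bst x.
  by rewrite /zfun (addrC (ast x)) addrK mulrC mulKf.
apply: (@sub_countable _ _ _ (range g)); last first.
  apply: sub_countable (card_image_le g setT) _; exact: countableP.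
apply: subset_card_le => u /= hbad.
case: (eqVneq (zfun ast bst x u) 0) => [h0|hz].
  by exists None => //; rewrite /g -h0 -hu.
have [[j k] hjk]: exists jk : 'I_m * nat, zfun ast bst x u = rootjk x jk.1 jk.2.
  apply: contrapT => hne; apply: hbad; apply: Phi_S => // j k.
  by apply/eqP => h; apply: hne; exists (j, k).
by exists (Some (j, k)) => //; rewrite /g /= -hjk -hu.
Qed.

End Bad.

Section Cvg.
Variables (R : realType) (n : nat).
Local Notation vec := 'rV[R]_n.+1.

Lemma cvg_rV {T} (F : set_system T) {FF : Filter F} (X : T -> vec) (L : vec) :
  (forall i, X t ord0 i @[t --> F] --> L ord0 i) -> X t @[t --> F] --> L.
Proof.
move=> hX; apply/cvgrPdist_lt => e e0.
have := @filter_forall T 'I_n.+1 (fun i t => `|L ord0 i - X t ord0 i| < e) F FF.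
move=> /(_ (fun i => (cvgrPdist_lt _ _).1 (hX i) e e0)); apply: filterS => t ht.
rewrite /Num.Def.normr /= mx_normrE; elim/big_ind: _ => //.
  by move=> x y hx hy; rewrite gt_max hx hy.
move=> [i j] _ /=; rewrite !mxE (ord1 i); exact: ht.
Qed.

Lemma cvg_coord {T} (F : set_system T) {FF : Filter F} (X : T -> vec) (L : vec) i :
  X t @[t --> F] --> L -> X t ord0 i @[t --> F] --> L ord0 i.
Proof.
move=> hX; exact: (continuous_cvg _ (@coord_continuous R 1 n.+1 ord0 i L) hX).
Qed.

Lemma cvg_bigsum {T} (F : set_system T) {FF : Filter F} (I : Type) (r : seq I)
  (f : I -> T -> R) (l : I -> R) :
  (forall i, f i t @[t --> F] --> l i) ->
  \sum_(i <- r) f i t @[t --> F] --> \sum_(i <- r) l i.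
Proof.
move=> hf; elim: r => [|a r IH].
  have -> : (fun t => \sum_(i <- [::]) f i t) = (fun=> 0) by apply: funext => t; rewrite big_nil.
  rewrite big_nil; exact: cvg_cst.
have -> : (fun t => \sum_(i <- a :: r) f i t) = (fun t => f a t + \sum_(i <- r) f i t).
  by apply: funext => t; rewrite big_cons.
rewrite big_cons; exact: cvgD.
Qed.

Lemma cvg_enorm {T} (F : set_system T) {FF : Filter F} (X : T -> vec) (L : vec) :
  X t @[t --> F] --> L -> enorm (X t) @[t --> F] --> enorm L.
Proof.
move=> hX; rewrite /enorm; apply: (@continuous_cvg _ _ _ F FF (fun t => \sum_i X t ord0 i ^+ 2) Num.sqrt _ (@sqrt_continuous R _)).
apply: cvg_bigsum => i; rewrite expr2.
have h := cvg_coord (i:=i) hX.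
have -> : (fun t => X t ord0 i ^+ 2) = (fun t => X t ord0 i * X t ord0 i) by apply: funext => t; rewrite expr2.
apply: cvgM; [exact: h|exact: h].
Qed.

Lemma cvg_newvec {T} (F : set_system T) {FF : Filter F} ast bst
  (X : T -> vec) (U : T -> R) x0 u0 :
  X t @[t --> F] --> x0 ->
  zfun ast bst (X t) (U t) @[t --> F] --> zfun ast bst x0 u0 ->
  newvec ast bst (X t) (U t) @[t --> F] --> newvec ast bst x0 u0.
Proof.
move=> hX hZ; apply: cvg_rV => i.
have -> : (fun t => newvec ast bst (X t) (U t) ord0 i) =
  (fun t => if val i == 0%N then zfun ast bst (X t) (U t) else X t ord0 (ord_pred i)).
  by apply: funext => t; rewrite mxE.
rewrite mxE; case: ifP => _; first exact: hZ.
exact: cvg_coord.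
Qed.

Lemma Phi_cvg {T} (F : set_system T) {FF : Filter F} ast bst
  (X : T -> vec) (U : T -> R) x0 u0 :
  X t @[t --> F] --> x0 ->
  zfun ast bst (X t) (U t) @[t --> F] --> zfun ast bst x0 u0 ->
  wfun ast bst x0 u0 != 0 ->
  Phi ast bst (X t) (U t) @[t --> F] --> Phi ast bst x0 u0.
Proof.
move=> hX hZ hw.
have hv := @cvg_newvec T F FF ast bst X U x0 u0 hX hZ.
rewrite /Phi; apply: cvgZ => //.
have := cvgV hw (@cvg_enorm T F FF _ _ hv); exact.
Qed.

End Cvg.

Section Seq.
Variables (R : realType) (n : nat).
Local Notation vec := 'rV[R]_n.+1.

Lemma inv_succ_small (r : R) : 0 < r -> \forall k \near \oo, k.+1%:R^-1 < r.
Proof.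
move=> r0; exists (Num.truncn r^-1) => // k /= hk.
rewrite -[r]invrK ltf_pV2 ?posrE ?invr_gt0 //.
apply: lt_le_trans (truncnS_gt _) _; rewrite ler_nat ltnS; exact: hk.
Qed.

Lemma seq_within (f : vec -> R) (S : set vec) (x : vec) :
  (forall u : nat -> vec, (forall k, S (u k)) -> u k @[k --> \oo] --> x ->
     f (u k) @[k --> \oo] --> f x) ->
  f y @[y --> within S (nbhs x)] --> f x.
Proof.
move=> H; apply/cvgrPdist_lt => e e0; apply: contrapT => hne.
have hex k : exists y, S y /\ `|x - y| < k.+1%:R^-1 /\ e <= `|f x - f y|.
  apply: contrapT => hk; apply: hne.
  rewrite /within /=; apply/nbhs_ballP; exists k.+1%:R^-1 => //= y.
  rewrite -ball_normE /= => hy Sy.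
  rewrite ltNge; apply/negP => hle; apply: hk; exists y; split => //.
have [u hu] := choice hex.
have hc : u k @[k --> \oo] --> x.
  apply/cvgrPdist_lt => r r0; near=> k.
  apply: lt_trans (hu k).2.1 _; near: k; exact: inv_succ_small.
have := H u (fun k => (hu k).1) hc.
move=> /cvgrPdist_lt /(_ e e0) [N _ hN].
have := hN N (leqnn N); rewrite ltNge (hu N).2.2 //.
Unshelve. all: by end_near.
Qed.

End Seq.

Lemma meas_off_countable (R : realType) (r : R -> R) (C : set R) :
  countable C -> {within ~` C, continuous r} -> measurable_fun setT r.
Proof.
move=> hC hc.
have mC : measurable C by apply: countable_measurable => // t; exact: measurable_set1.
have mD : measurable (~` C) by exact: measurableC.
have hD := measurable_realfun.subspace_continuous_measurable_fun mD hc.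
move=> _ B mB; rewrite setTI.
have -> : r @^-1` B = (~` C `&` r @^-1` B) `|` (C `&` r @^-1` B).
  apply/seteqP; split => x /=; last by case => -[].
  by move=> hx; case: (pselect (C x)) => hcx; [right|left].
apply: measurableU; first exact: hD.
apply: countable_measurable; first by move=> t; exact: measurable_set1.
apply: (sub_countable _ hC); apply: subset_card_le; exact: subIsetl.
Qed.

Section Key.
Variables (R : realType) (n : nat).
Local Notation vec := 'rV[R]_n.+1.
Variables (ast bst : vec -> R) (m : nat) (nrm : 'I_m -> vec).
Local Notation S := (Theta_ss nrm).
Hypothesis n0 : (0 < n)%N.
Hypothesis hcont : forall x, S x -> {for x, continuous ast} /\ {for x, continuous bst}.
Hypothesis hbnz : forall x, S x -> bst x != 0.

Definition Bad x := [set u : R | ~ S (Phi ast bst x u)].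

Lemma Bad_countable x : S x -> countable (Bad x).
Proof. move=> Sx; exact: bad_countable n0 Sx (hbnz Sx). Qed.

Lemma S_notH0 x : S x -> ~ H0 x.
Proof. by case=> -[]. Qed.

Lemma within_cvgF {T} (F : set_system T) {FF : Filter F} (v : T -> vec) (y : vec) :
  (\forall t \near F, S (v t)) -> v t @[t --> F] --> y ->
  v t @[t --> F] --> within S (nbhs y).
Proof.
move=> hS hv P /= hP; have := hv _ hP.
by apply: filterS2 hS => t h1 h2; exact: h2 h1.
Qed.

Lemma meas_gPhi (g : vec -> R) x : {within S, continuous g} -> S x ->
  measurable_fun setT (fun u => g (Phi ast bst x u)).
Proof.
move=> gc Sx; apply: (meas_off_countable (Bad_countable Sx)).
apply/subspace_continuousP => u0 hu0.
have S0 : S (Phi ast bst x u0) by apply: contrapT.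
have hP : Phi ast bst x u @[u --> within (~` Bad x) (nbhs u0)] -->
    within S (nbhs (Phi ast bst x u0)).
  apply: within_cvgF.
    have hw : \forall u \near within (~` Bad x) (nbhs u0), (~` Bad x) u.
      exact: withinT.
    by apply: filterS hw => u hu; apply: contrapT.
  apply: (@Phi_cvg R n R _ _ ast bst (fun=> x) id x u0).
  - exact: cvg_cst.
  - rewrite /zfun; apply: cvgD; first exact: cvg_cst.
    apply: cvgM; first exact: cvg_cst.
    exact: cvg_within.
  - exact: wfun_neq0 (S_notH0 Sx).
have hg := (subspace_continuousP _ _).1 gc _ S0.
exact: cvg_trans (cvg_app g hP) hg.
Qed.

End Key.

From mathcomp Require Import measurable_realfun.

Section Int.
Variables (R : realType) (n : nat).
Local Notation vec := 'rV[R]_n.+1.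
Variables (ast bst : vec -> R) (m : nat) (nrm : 'I_m -> vec).
Local Notation S := (Theta_ss nrm).
Hypothesis n0 : (0 < n)%N.
Hypothesis hcont : forall x, S x -> {for x, continuous ast} /\ {for x, continuous bst}.
Hypothesis hbnz : forall x, S x -> bst x != 0.
Variable f : R -> R.
Hypothesis mf : measurable_fun setT f.
Hypothesis f0 : forall u, 0 <= f u.
Hypothesis fint : (\int[lebesgue_measure]_u (f u)%:E = 1)%E.

Lemma f_integrable : lebesgue_measure.-integrable setT (EFin \o f).
Proof.
apply/integrableP; split; first exact/measurable_realfun.measurable_EFinP.
have -> : (\int[lebesgue_measure]_x `|(EFin \o f) x| = \int[lebesgue_measure]_u (f u)%:E)%E.
  by apply: eq_integral => u _; rewrite /comp abse_EFin ger0_norm.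
by rewrite fint ltry.
Qed.

Lemma cf_int r : lebesgue_measure.-integrable setT (EFin \o (fun u => r * f u)).
Proof.
have := integrableZl measurableT r f_integrable.
by rewrite (_ : (fun x => _) = EFin \o (fun u => r * f u)) //; apply: funext => u; rewrite /= EFinM.
Qed.

Lemma Rint_cf r : Rintegral lebesgue_measure setT (fun u => r * f u) = r.
Proof.
rewrite RintegralZl //; last exact: f_integrable.
by rewrite /Rintegral fint /= mulr1.
Qed.

Section G.
Variables (g : vec -> R) (M : R).
Hypothesis gM : forall y, `|g y| <= M.
Hypothesis gc : {within S, continuous g}.

Definition h x u := g (Phi ast bst x u) * f u.

Lemma h_meas x : S x -> measurable_fun setT (h x).
Proof.
move=> Sx; rewrite /h.
apply: (measurable_realfun.measurable_funM (f := fun u => g (Phi ast bst x u)) (g := f)) => //.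
exact: (meas_gPhi ast n0 hbnz gc Sx).
Qed.

Lemma h_le x u : `|h x u| <= M * f u.
Proof. rewrite /h normrM (ger0_norm (f0 u)); apply: ler_wpM2r => //. Qed.

Lemma h_int x : S x -> lebesgue_measure.-integrable setT (EFin \o h x).
Proof.
move=> Sx; apply: (le_integrable measurableT _ _ (cf_int M)).
  by apply/measurable_realfun.measurable_EFinP; exact: h_meas Sx.
move=> u _; rewrite /comp !abse_EFin lee_fin; apply: le_trans (h_le x u) _.
exact: ler_norm.
Qed.

Lemma Kop_bound x : S x -> `|Kop ast bst f g x| <= M.
Proof.
move=> Sx; rewrite /Kop -/(h x) ler_norml; apply/andP; split.
  rewrite -{1}(Rint_cf (- M)); apply: le_Rintegral => //; first exact: cf_int.
    exact: h_int.
  move=> u _; have := h_le x u; rewrite ler_norml mulNr => /andP[] //.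
rewrite -[leRHS](Rint_cf M); apply: le_Rintegral => //; first exact: h_int.
  exact: cf_int.
move=> u _; have := h_le x u; rewrite ler_norml => /andP[] //.
Qed.

Lemma Kop_cont : {within S, continuous (Kop ast bst f g)}.
Proof.
apply/subspace_continuousP => x0 Sx0; apply: seq_within => u hu hux.
pose N := \bigcup_(o in [set: option nat]) Bad ast bst nrm (if o is Some k then u k else x0).
have cN : countable N.
  apply: bigcup_countable; first exact: countableP.
  by move=> [k|] _; apply: (Bad_countable ast n0 hbnz).
have mN : measurable N.
  by apply: countable_measurable => // t; exact: measurable_set1.
have N0 : lebesgue_measure N = 0%E by exact: countable_lebesgue_measure0.
have hgood u' : ~ N u' -> S (Phi ast bst x0 u') /\ forall k, S (Phi ast bst (u k) u').
  move=> hN; split; last move=> k; apply: contrapT => hb; apply: hN.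
    by exists None.
  by exists (Some k).
have mf_ : forall k, measurable_fun setT (EFin \o h (u k)).
  by move=> k; apply/measurable_realfun.measurable_EFinP; exact: h_meas.
have mf_0 : measurable_fun setT (EFin \o h x0).
  by apply/measurable_realfun.measurable_EFinP; exact: h_meas.
have ig : lebesgue_measure.-integrable setT (fun u' => (M%:E * (f u')%:E)%E).
  exact: integrableZl f_integrable.
have f_g : {ae lebesgue_measure, forall u' k, setT u' ->
    (`|(EFin \o h (u k)) u'| <= M%:E * (f u')%:E)%E}.
  by apply: aeW => u' k _; rewrite /comp abse_EFin -EFinM lee_fin; exact: h_le.
have f_f : {ae lebesgue_measure, forall u', setT u' -> (fun k => (EFin \o h (u k)) u') @ \oo --> (EFin \o h x0) u'}.
  exists N; split => // u' /= hnot; apply: contrapT => hN; apply: hnot => _.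
  have [S0 Sk] := hgood u' hN.
  apply: cvg_EFin; first exact: nearW.
  rewrite /comp /h /=; apply: cvgM; last exact: cvg_cst.
  have hP : Phi ast bst (u k) u' @[k --> \oo] --> within S (nbhs (Phi ast bst x0 u')).
    apply: within_cvgF; first exact: nearW.
    apply: (@Phi_cvg R n nat _ _ ast bst u (fun=> u') x0 u' hux).
      rewrite /zfun; apply: cvgD.
        exact: (continuous_cvg _ (hcont Sx0).1 hux).
      apply: cvgM; last exact: cvg_cst.
      exact: (continuous_cvg _ (hcont Sx0).2 hux).
    exact: wfun_neq0 (S_notH0 Sx0).
  exact: cvg_trans (cvg_app g hP) ((subspace_continuousP _ _).1 gc _ S0).
have [_ _ hc] := @dominated_convergence _ _ R lebesgue_measure setT measurableT (fun k => EFin \o h (u k)) (EFin \o h x0) (fun u' => (M%:E * (f u')%:E)%E) mf_ mf_0 f_f ig f_g.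
rewrite /Kop /Rintegral.
have hfin := integrable_fin_num measurableT (h_int Sx0).
apply: (@fine_cvg _ _ _ _ _ (fine _)); rewrite fineK //.
Qed.

End G.
Definition patch (g : vec -> R) := fun y => if asbool (S y) then g y else 0.

Lemma patch_cont (g : vec -> R) : {within S, continuous g} ->
  {within S, continuous (patch g)}.
Proof.
move=> gc; apply: (subspace_eq_continuous _ gc) => y /set_mem Sy.
by rewrite /patch /from_subspace asboolT.
Qed.

Lemma Kop_patch (g : vec -> R) x : {within S, continuous g} -> S x ->
  Kop ast bst f g x = Kop ast bst f (patch g) x.
Proof.
move=> gc Sx; rewrite /Kop /Rintegral; congr fine.
have gSc := patch_cont gc.
apply: ae_eq_integral => //.
- apply/measurable_realfun.measurable_EFinP.
  apply: (measurable_realfun.measurable_funM (f := fun u => g (Phi ast bst x u)) (g := f)) => //.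
  exact: (meas_gPhi ast n0 hbnz gc Sx).
- apply/measurable_realfun.measurable_EFinP.
  apply: (measurable_realfun.measurable_funM (f := fun u => patch g (Phi ast bst x u)) (g := f)) => //.
  exact: (meas_gPhi ast n0 hbnz gSc Sx).
exists (Bad ast bst nrm x); split.
- apply: countable_measurable; first by move=> t; exact: measurable_set1.
  exact: (Bad_countable ast n0 hbnz Sx).
- exact/countable_lebesgue_measure0/(Bad_countable ast n0 hbnz Sx).
move=> u /= hu; apply: contrapT => hnb; apply: hu => _.
by rewrite /patch asboolT //; apply: contrapT.
Qed.

Lemma step (g : vec -> R) M : (forall x, S x -> `|g x| <= M) ->
  {within S, continuous g} ->
  (forall x, S x -> `|Kop ast bst f g x| <= M) /\
  {within S, continuous (Kop ast bst f g)}.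
Proof.
move=> gM gc.
have gSM : forall y, `|patch g y| <= Num.max M 0.
  move=> y; rewrite /patch; case: asboolP => Sy.
    by apply: le_trans (gM _ Sy) _; rewrite le_max lexx.
  by rewrite normr0 le_max lexx orbT.
have gSc := patch_cont gc.
split.
  move=> x Sx; have M0 : 0 <= M by apply: le_trans (gM _ Sx).
  rewrite (Kop_patch gc Sx).
  have := Kop_bound gSM gSc Sx; rewrite (max_idPl M0); exact.
apply: (subspace_eq_continuous _ (Kop_cont gSM gSc)) => y /set_mem Sy.
by rewrite /from_subspace (Kop_patch gc Sy).
Qed.

End Int.

From mathcomp Require Import measurable_realfun.

Lemma norm1_cases (R : realType) (a : R) : `|a| = 1 -> a = 1 \/ a = -1.
Proof.
have [ha|ha] := leP 0 a.
  by rewrite ger0_norm // => ->; left.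
by rewrite ltr0_norm // => h; right; rewrite -[a]opprK h.
Qed.

Lemma enorm1 (R : realType) (y : 'rV[R]_1) : enorm y = `|y ord0 ord0|.
Proof. by rewrite /enorm big_ord1 sqrtr_sqr. Qed.

Lemma dim1_cont (R : realType) (m : nat) (nrm : 'I_m -> 'rV[R]_1) (h : 'rV[R]_1 -> R) :
  {within Theta_ss nrm, continuous h}.
Proof.
apply/subspace_continuousP => x Sx; apply: seq_within => u hu hux.
have hc : u k ord0 ord0 @[k --> \oo] --> x ord0 ord0 by apply: cvg_coord.
have near1 := (cvgrPdist_lt _ _).1 hc 1 ltr01.
apply/cvgrPdist_lt => e e0; near=> k.
have hk : `|x ord0 ord0 - u k ord0 ord0| < 1 by near: k; exact: near1.
suff -> : u k = x by rewrite subrr normr0.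
apply/rowP => i; rewrite (ord1 i).
have hx : `|x ord0 ord0| = 1 by rewrite -enorm1; case: Sx => -[] [].
have hy : `|u k ord0 ord0| = 1 by rewrite -enorm1; case: (hu k) => -[] [].
move: hk; rewrite ltr_norml.
case: (norm1_cases hx) => ->; case: (norm1_cases hy) => -> //= /andP[h1 h2]; lra.
Unshelve. all: by end_near.
Qed.

Theorem lemma5p5 (R : realType) (p : nat)
  (a b : 'rV[R]_p -> R) (f : R -> R)
  (a_ b_ : 'rV[R]_p -> R)
  (m : nat) (nrm : 'I_m -> 'rV[R]_p)
  (q : 'rV[R]_p -> R) :
  (0 < p)%N ->
  (* the model: a, b Borel; e_t has Lebesgue density f *)
  borel_meas a -> borel_meas b ->
  measurable_fun setT f -> (forall u, 0 <= f u) ->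
  (\int[lebesgue_measure]_u (f u)%:E = 1)%E ->
  (* A.1 *)
  (forall x : R, exists2 c : R, 0 < c & \forall y \near x, c <= f y) ->
  (forall x, 0 < b x) -> locally_bounded b -> loc_bdd_away0 setT b ->
  (* A.2 *)
  (exists M : R, forall u, (1 + `|u|) * f u <= M) ->
  (exists2 r0 : R, 0 < r0 &
     (\int[lebesgue_measure]_u ((`|u| `^ r0) * f u)%:E < +oo)%E) ->
  (* A.3 *)
  (exists M : R, forall x, `|a x| <= M * (1 + enorm x)) ->
  (exists M : R, forall x, `|b x| <= M * (1 + enorm x)) ->
  (* A.4 *)
  (exists M : R, forall th, Theta th -> `|a_ th| <= M /\ `|b_ th| <= M) ->
  (forall eps : R, 0 < eps -> exists W : R, forall w : R, W < w ->
     forall th, Theta th ->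
       `|a (w *: th) / w - a_ th| < eps /\ `|b (w *: th) / w - b_ th| < eps) ->
  (* A.5 *)
  ((1 < p)%N ->
     loc_bdd_away0 [set x | x != 0]
       (fun x => Num.max `|homog_ext a_ x| (homog_ext b_ x)) /\
     loc_bdd_away0 (~` H0 (p:=p)) (homog_ext b_)) ->
  (* A.6 *)
  (forall j, nrm j != 0) ->
  ((1 < p)%N -> forall x, (forall j, ~ hyperplane (nrm j) x) ->
     {for x, continuous (homog_ext a_)} /\ {for x, continuous (homog_ext b_)}) ->
  (* hypotheses on q *)
  (exists M : R, forall th, Theta th -> `|q th| <= M) ->
  borel_meas q ->
  {within Theta_ss nrm, continuous q} ->
  forall t : nat, (1 <= t)%N ->
    {within Theta_ss nrm,
      continuous (condexp (homog_ext a_) (homog_ext b_) f t q)}.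
Proof.
destruct p as [|n] => //.
move=> _ _ _ mf f0 fint _ _ _ _ _ _ _ _ _ _ hA5 _ hA6 [M hqM] _ hqc t _.
destruct n as [|n']; first exact: dim1_cont.
have n0 : (0 < n'.+1)%N by [].
have p1 : (1 < n'.+2)%N by [].
have hcont : forall x, Theta_ss nrm x ->
    {for x, continuous (homog_ext a_)} /\ {for x, continuous (homog_ext b_)}.
  by move=> x Sx; apply: hA6 => // j; exact: (Sx.2 j 0%N).
have hbnz : forall x, Theta_ss nrm x -> homog_ext b_ x != 0.
  move=> x Sx; have [c c0 hc] := (hA5 p1).2 x (S_notH0 Sx).
  have := nbhs_singleton hc (S_notH0 Sx); apply: contraTneq => ->.
  by rewrite normr0 -ltNge.
have key : forall t, (forall x, Theta_ss nrm x ->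
      `|iter t (Kop (homog_ext a_) (homog_ext b_) f) q x| <= M) /\
    {within Theta_ss nrm, continuous (iter t (Kop (homog_ext a_) (homog_ext b_) f) q)}.
  elim => [|k [IHb IHc]].
    by split => //= x Sx; apply: hqM; case: Sx => -[].
  exact: (step n0 hcont hbnz mf f0 fint IHb IHc).
exact: (key t).2.
Qed.
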